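(* Let $\mathbb{F}$ be a field, $T_1,T_2\subseteq\mathbb{F}$ sets of size $n$, and $d,\ell,s,r$ natural numbers with $d\ge\ell$ and $r=s-\lfloor\frac{d-\ell}{n}\rfloor$. Let $f\colon T_1\times T_2\to\mathbb{F}_{<s}[z_1,z_2]$, and let $P=\sum_{i=\ell}^dP_i(x_1)x_2^{d-i}$ be a polynomial of total degree at most $d$ (so $\deg P_i\le i$) with $\Delta^{(s)}_{\mathrm{mult}}(f,\mathrm{Enc}^{(s)}_{T_1\times T_2}(P))<\frac12n^2(s-\frac dn)$. With $g\colon T_1\to\mathbb{F}_{<r}[z_1]$ and $w\colon T_1\times[r]\to\mathbb{Z}_{\ge0}$ defined from $f$ as below, \[\Gamma^{s,d,\ell}_w(g,P_\ell)\le\Delta^{(s)}_{\mathrm{mult}}\big(f,\mathrm{Enc}^{(s)}_{T_1\times T_2}(P)\big)<\frac12n^2\Big(s-\frac dn\Big).\]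
   Context: Encodings: $\mathrm{Enc}^{(s)}_{T_1\times T_2}(P)(a,b)=P(a+z_1,b+z_2)\bmod\langle z_1,z_2\rangle^s$; for univariate $G$ and $t\ge1$, $\mathrm{Enc}^{(t)}_{T_2}(G)(b)=G(b+z_2)\bmod z_2^t$. $d^{(t)}_{\min}(Q)$ is the minimum of $t$ and the lowest degree of a monomial with nonzero coefficient in $Q$ ($t$ if $Q=0$); $\Delta^{(t)}_{\mathrm{mult}}(f,g)=\sum_{\mathbf a}(t-d^{(t)}_{\min}(f(\mathbf a)-g(\mathbf a)))$ over the domain. Write $f(a,b)=\sum_{i,j}f_{(i,j)}(a,b)z_1^iz_2^j$. For $a\in T_1$ and $i\in[r]=\{0,\dots,r-1\}$, let $f^{(i,a)}\colon T_2\to\mathbb{F}_{<s-i}[z_2]$, $f^{(i,a)}(b)=\sum_{j\in[s-i]}f_{(i,j)}(a,b)z_2^j$. Let $G^{(i,a)}\in\mathbb{F}_{\le d-\ell}[x_2]$ be the (unique) polynomial of degree $\le d-\ell$ with $\Delta^{(s-i)}_{\mathrm{mult}}(f^{(i,a)},\mathrm{Enc}^{(s-i)}(G^{(i,a)}))<\frac12((s-i)n-(d-\ell))$ if one exists, and $G^{(i,a)}=0$ otherwise. Set $w(a,i)=\min\{\Delta^{(s-i)}_{\mathrm{mult}}(f^{(i,a)},\mathrm{Enc}^{(s-i)}(G^{(i,a)})),\frac n2((s-i)-\frac{d-\ell}{n})\}$ and $g(a)=\sum_{i\in[r]}\mathrm{Coeff}_{x_2^{d-\ell}}(G^{(i,a)})z_1^i$.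 Finally, with $A_i(g,R)=\{a\in T_1:\max\{j\in[r+1]:g(a)\equiv R(a+z_1)\bmod\langle z_1\rangle^j\}=i\}$ for $i\in[r+1]$, $\Gamma^{s,d,\ell}_w(g,R)=\sum_{i=0}^{r-1}\sum_{a\in A_i(g,R)}\max\{n((s-i)-\frac{d-\ell}{n})-w(a,i),\max_{j<i}w(a,j)\}+\sum_{a\in A_r(g,R)}\max_{j<r}w(a,j)$ (empty maxima ignored). *)

(* Defs.v *)
From HB Require Import structures.
From mathcomp Require Import all_boot all_order all_algebra.
From Stdlib Require Import ClassicalEpsilon.
Set Implicit Arguments. Unset Strict Implicit. Unset Printing Implicit Defensive.
Import Order.TTheory GRing.Theory Num.Theory.
Local Open Scope ring_scope.

Section MultCodes.
Variable F : fieldType.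

(* A truncated bivariate polynomial in F_{<s}[z1,z2] is represented by its
   coefficient function (i, j) |-> coefficient of z1^i z2^j;
   only coefficients with i + j < s are meaningful. *)

Definition dmin2 (s : nat) (Q : nat -> nat -> F) : nat :=
  \big[minn/s]_(i < s) \big[minn/s]_(j < s - i)
     (if Q i j != 0 then (i + j)%N else s).

Definition dmin1 (t : nat) (Q : nat -> F) : nat :=
  \big[minn/t]_(j < t) (if Q j != 0 then (j : nat) else t).

Definition Delta2 (s : nat) (T1 T2 : seq F) (f g : F -> F -> nat -> nat -> F) : nat :=
  \sum_(a <- T1) \sum_(b <- T2) subn s (dmin2 s (fun i j => (f a b i j - g a b i j)%R)).

Definition Delta1 (t : nat) (T2 : seq F) (f g : F -> nat -> F) : nat :=
  \sum_(b <- T2) subn t (dmin1 t (fun j => (f b j - g b j)%R)).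

(* P(a + z1, b + z2) for P in {poly {poly F}}: outer variable x2,
   coefficients are polynomials in x1. *)
Definition shift2 (P : {poly {poly F}}) (a b : F) : {poly {poly F}} :=
  (map_poly (fun q : {poly F} => q \Po ('X + a%:P)) P) \Po ('X + (b%:P)%:P).

Definition Enc2 (s : nat) (P : {poly {poly F}}) (a b : F) (i j : nat) : F :=
  if (i + j < s)%N then ((shift2 P a b)`_j)`_i else 0.

Definition Enc1 (t : nat) (G : {poly F}) (b : F) (j : nat) : F :=
  if (j < t)%N then (G \Po ('X + b%:P))`_j else 0.

Variables (T1 T2 : seq F) (n d l s r : nat) (f : F -> F -> nat -> nat -> F).

Definition fia (i : nat) (a : F) : F -> nat -> F :=
  fun b j => if (j < s - i)%N then f a b i j else 0.

Definition goodG (i : nat) (a : F) (G : {poly F}) : Prop :=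
  (size G <= (d - l).+1)%N /\
  ((Delta1 (s - i) T2 (fia i a) (Enc1 (s - i) G))%:R : rat)
     < (1/2) * (((s - i)%N)%:R * n%:R - ((d - l)%N)%:R).

(* G^{(i,a)}: a (the unique) polynomial satisfying goodG if one exists, else 0 *)
Definition Gia (i : nat) (a : F) : {poly F} :=
  match excluded_middle_informative (exists G, goodG i a G) with
  | left e => proj1_sig (constructive_indefinite_description _ e)
  | right _ => 0
  end.

Definition wt (a : F) (i : nat) : rat :=
  Num.min ((Delta1 (s - i) T2 (fia i a) (Enc1 (s - i) (Gia i a)))%:R)
          ((n%:R / 2) * (((s - i)%N)%:R - ((d - l)%N)%:R / n%:R)).

Definition gfun (a : F) (k : nat) : F :=
  if (k < r)%N then (Gia k a)`_(d - l) else 0.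

Definition agreeLen (R : {poly F}) (a : F) : nat :=
  (\max_(j < r.+1 | [forall k : 'I_j, (gfun a k == (R \Po ('X + a%:P))`_k)%R]) (j : nat))%N.

(* max_{j<i} w(a,j), for i > 0 *)
Definition maxprev (a : F) (i : nat) : rat :=
  \big[Num.max/wt a 0]_(j < i) wt a j.

(* Gamma^{s,d,l}_w(g, R); empty maxima are ignored *)
Definition Gamma (R : {poly F}) : rat :=
  \sum_(i < r) \sum_(a <- T1 | agreeLen R a == i)
      (let X := n%:R * (((s - i)%N)%:R - ((d - l)%N)%:R / n%:R) - wt a i in
       if (i : nat) == 0%N then X else Num.max X (maxprev a i))
  + \sum_(a <- T1 | agreeLen R a == r)
      (if r == 0%N then 0 else maxprev a r).

End MultCodes.

(* Main.v *)
Require Import Defs.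
From Stdlib Require Import Classical ClassicalEpsilon.
From HB Require Import structures.
From mathcomp Require Import all_boot all_order all_algebra.
From mathcomp Require Import ring lra zify.
Set Implicit Arguments. Unset Strict Implicit. Unset Printing Implicit Defensive.
Import Order.TTheory GRing.Theory Num.Theory.
Local Open Scope ring_scope.

Section H.
Variable F : fieldType.

Lemma bigmin_le (t x : nat) (G : 'I_t -> nat) (j : 'I_t) :
  (\big[minn/x]_(i < t) G i <= G j)%N.
Proof.
have : j \in index_enum 'I_t by rewrite mem_index_enum.
elim: (index_enum 'I_t) => // k r IH; rewrite inE big_cons.
case/orP=> [/eqP<-|/IH h]; first by rewrite geq_minl.
by rewrite geq_min h orbT.
Qed.

Lemma dmin1_le t (Q : nat -> F) : (dmin1 t Q <= t)%N.
Proof.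
rewrite /dmin1; apply: (big_ind (fun x => x <= t)%N) => //.
- by move=> x y hx hy; rewrite geq_min hx.
- by move=> i _; case: ifP => // _; exact: ltnW.
Qed.

Lemma dmin1_zero t (Q : nat -> F) j : (j < dmin1 t Q)%N -> Q j = 0.
Proof.
move=> hj; have hjt : (j < t)%N by apply: leq_trans hj (dmin1_le _ _).
have := bigmin_le t (fun i : 'I_t => if Q i != 0 then (i : nat) else t) (Ordinal hjt).
rewrite -/(dmin1 t Q) /=; case: eqP => // _.
by rewrite leqNgt hj.
Qed.

Lemma dmin1_ge t (Q : nat -> F) k : (k <= t)%N -> (forall j, (j < k)%N -> Q j = 0) ->
  (k <= dmin1 t Q)%N.
Proof.
move=> hk hQ; rewrite /dmin1; apply: (big_ind (fun x => k <= x)%N) => //.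
- by move=> x y hx hy; rewrite leq_min hx.
- move=> i _; case: eqP => // hi; rewrite leqNgt; apply/negP => /hQ; done.
Qed.

Lemma Delta1_tri t T (f g h : F -> nat -> F) :
  (Delta1 t T f g <= Delta1 t T f h + Delta1 t T h g)%N.
Proof.
rewrite /Delta1 -big_split /=; apply: leq_sum => b _.
set x := dmin1 t _; set y := dmin1 t _; set z := dmin1 t _.
have hy : (y <= t)%N := dmin1_le _ _.
have hz : (z <= t)%N := dmin1_le _ _.
have : (minn y z <= x)%N.
  apply: dmin1_ge; first by rewrite geq_min hy.
  move=> j; rewrite leq_min => /andP[/dmin1_zero h1 /dmin1_zero h2].
  have -> : f b j - g b j = (f b j - h b j) + (h b j - g b j) by rewrite addrA subrK.
  by rewrite h1 h2 addr0.
lia.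
Qed.

Lemma dmin1_eq t (Q Q' : nat -> F) : (forall j, (j < t)%N -> (Q j != 0) = (Q' j != 0)) ->
  dmin1 t Q = dmin1 t Q'.
Proof. by move=> h; rewrite /dmin1; apply: eq_bigr => i _; rewrite h. Qed.

Lemma Delta1_sym t T (f g : F -> nat -> F) : Delta1 t T f g = Delta1 t T g f.
Proof.
rewrite /Delta1; apply: eq_bigr => b _; congr (_ - _)%N.
by apply: dmin1_eq => j _; rewrite -opprB oppr_eq0.
Qed.

Lemma Enc1B t (G G' : {poly F}) b j :
  Enc1 t G b j - Enc1 t G' b j = Enc1 t (G - G') b j.
Proof. by rewrite /Enc1; case: ifP => _; rewrite ?subr0 // comp_polyB coefB. Qed.

Lemma compXn (q : {poly F}) k : 'X^k \Po q = q ^+ k.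
Proof. by elim: k => [|k IH]; rewrite ?comp_polyC // !exprS comp_polyM comp_polyX IH. Qed.

Lemma dvd_shift (H : {poly F}) b k :
  (forall j, (j < k)%N -> (H \Po ('X + b%:P))`_j = 0) -> ('X - b%:P) ^+ k %| H.
Proof.
move=> hz; set p := H \Po ('X + b%:P).
have ht : take_poly k p = 0.
  by apply/polyP => j; rewrite coef_take_poly coef0; case: ifP => // /hz.
have hp : p = drop_poly k p * 'X^k by rewrite -{1}(poly_take_drop k p) ht add0r.
have hH : H = p \Po ('X - b%:P).
  rewrite /p -comp_polyA comp_polyD comp_polyX comp_polyC subrK comp_polyXr //.
by rewrite hH hp comp_polyM compXn dvdp_mull.
Qed.

Lemma prod_root (T : seq F) (k : F -> nat) x : x \notin T ->
  ~~ root (\prod_(b <- T) ('X - b%:P) ^+ k b) x.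
Proof.
elim: T => [|c T IH]; first by rewrite big_nil rootE hornerE oner_eq0.
rewrite inE negb_or => /andP[hxc /IH hT]; rewrite big_cons rootM negb_or hT andbT.
by rewrite rootE horner_exp hornerXsubC expf_eq0 subr_eq0 (negPf hxc) andbF.
Qed.

Lemma prod_size (T : seq F) (k : F -> nat) :
  size (\prod_(b <- T) ('X - b%:P) ^+ k b) = (\sum_(b <- T) k b).+1.
Proof.
elim: T => [|c T IH]; first by rewrite !big_nil size_poly1.
have h1 : ('X - c%:P) ^+ k c != 0 by rewrite -size_poly_eq0 size_exp_XsubC.
have h2 : \prod_(b <- T) ('X - b%:P) ^+ k b != 0 by rewrite -size_poly_eq0 IH.
by rewrite !big_cons size_mul // IH size_exp_XsubC addnS addSn.
Qed.

Lemma prod_dvd (T : seq F) (k : F -> nat) (H : {poly F}) : uniq T ->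
  (forall b, b \in T -> ('X - b%:P) ^+ k b %| H) ->
  \prod_(b <- T) ('X - b%:P) ^+ k b %| H.
Proof.
elim: T => [|c T IH]; first by rewrite big_nil dvd1p.
move=> /= /andP[hc hu] hd; rewrite big_cons Gauss_dvdp.
  by rewrite hd ?mem_head // IH // => b hb; rewrite hd // inE hb orbT.
apply: coprimep_expl; rewrite coprimep_sym coprimep_XsubC; exact: prod_root.
Qed.

Lemma root_count t (T : seq F) (H : {poly F}) : uniq T -> H != 0 ->
  (\sum_(b <- T) dmin1 t (Enc1 t H b) <= (size H).-1)%N.
Proof.
move=> hu hH.
have hd : \prod_(b <- T) ('X - b%:P) ^+ (dmin1 t (Enc1 t H b)) %| H.
  apply: prod_dvd => // b _; apply: dvd_shift => j hj.
  have := dmin1_zero hj; rewrite /Enc1.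
  by have := leq_trans hj (dmin1_le t (Enc1 t H b)) => ->.
have := dvdp_leq hH hd; rewrite prod_size; case: (size H) => //.
Qed.

Lemma sum_sub t (T : seq F) (k : F -> nat) : (forall b, k b <= t)%N ->
  (\sum_(b <- T) (t - k b) + \sum_(b <- T) k b = t * size T)%N.
Proof.
move=> hk; elim: T => [|c T IH]; first by rewrite !big_nil muln0.
rewrite !big_cons /= mulnS; have := hk c; lia.
Qed.

Lemma Enc_dist t (T : seq F) m (G G' : {poly F}) : uniq T -> G != G' ->
  (size G <= m.+1)%N -> (size G' <= m.+1)%N ->
  (t * size T - m <= Delta1 t T (Enc1 t G) (Enc1 t G'))%N.
Proof.
move=> hu hne hG hG'.
have hH : G - G' != 0 by rewrite subr_eq0.
have hs : (size (G - G')%R <= m.+1)%N.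
  by apply: leq_trans (size_add _ _) _; rewrite size_opp geq_max hG hG'.
have hr := root_count t hu hH.
have e : Delta1 t T (Enc1 t G) (Enc1 t G') = (\sum_(b <- T) (t - dmin1 t (Enc1 t (G - G')%R b)))%N.
  by rewrite /Delta1; apply: eq_bigr => b _; congr (_ - _)%N; apply: dmin1_eq => j _; rewrite Enc1B.
have := sum_sub T (fun b => dmin1_le t (Enc1 t (G - G') b)).
rewrite e; move: hr hs; set S := (\sum_(b <- T) dmin1 _ _)%N; set D := (\sum_(b <- T) _)%N.
move: (size (G - G')%R) => z; lia.
Qed.
End H.

Lemma natrB_ge (a b : nat) : (a%:R - b%:R : rat) <= ((a - b)%N)%:R.
Proof.
case: (leqP b a) => h; first by rewrite natrB.
apply: le_trans (ler0n _ _); rewrite subr_le0 ler_nat; exact: ltnW.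
Qed.

Section Dec.
Variables (F : fieldType) (T2 : seq F) (n d l s : nat) (f : F -> F -> nat -> nat -> F).
Hypotheses (hu : uniq T2) (hn : size T2 = n) (hn0 : (0 < n)%N).

Let E i a Q := Delta1 (s - i) T2 (fia s f i a) (Enc1 (s - i) Q).

Lemma good_uniq i a G G' : goodG T2 n d l s f i a G -> goodG T2 n d l s f i a G' -> G = G'.
Proof.
move=> [hG hGd] [hG' hGd']; case: (eqVneq G G') => // hne; exfalso.
have hd := Enc_dist (s - i) hu hne hG hG'.
have ht := Delta1_tri (s - i) T2 (Enc1 (s - i) G) (Enc1 (s - i) G') (fia s f i a).
rewrite [X in (_ <= X + _)%N]Delta1_sym in ht.
have := natrB_ge ((s - i) * size T2) (d - l); rewrite hn => hb.
move: hd ht; rewrite -(ler_nat rat) => hd; rewrite -(ler_nat rat) natrD => ht.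
rewrite natrM in hb; rewrite hn in hd. lra.
Qed.

Lemma Gia_good i a : (exists G, goodG T2 n d l s f i a G) -> goodG T2 n d l s f i a (Gia T2 n d l s f i a).
Proof.
move=> ex; rewrite /Gia; case: excluded_middle_informative => // e.
exact: (proj2_sig (constructive_indefinite_description _ e)).
Qed.

Lemma Gia_none i a : ~ (exists G, goodG T2 n d l s f i a G) -> Gia T2 n d l s f i a = 0.
Proof. by move=> nex; rewrite /Gia; case: excluded_middle_informative. Qed.

Lemma Gia_size i a : (size (Gia T2 n d l s f i a) <= (d - l).+1)%N.
Proof.
case: (classic (exists G, goodG T2 n d l s f i a G)) => ex.
  by case: (Gia_good ex).
by rewrite Gia_none // size_poly0.
Qed.

Lemma Gia_eq i a (Q : {poly F}) : (size Q <= (d - l).+1)%N ->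
  ((E i a Q)%:R : rat) < (1/2) * (((s - i)%N)%:R * n%:R - ((d - l)%N)%:R) ->
  Gia T2 n d l s f i a = Q.
Proof.
move=> hs he; have g : goodG T2 n d l s f i a Q by split.
apply: good_uniq g; apply: Gia_good; by exists Q.
Qed.

Lemma half_eq (t m : nat) : (n%:R / 2) * (t%:R - m%:R / n%:R) = (1/2) * (t%:R * n%:R - m%:R) :> rat.
Proof. have hn' : (n%:R : rat) != 0 by rewrite pnatr_eq0 -lt0n. field; exact hn'. Qed.

Lemma wt_le i a (Q : {poly F}) : (size Q <= (d - l).+1)%N -> wt T2 n d l s f a i <= (E i a Q)%:R.
Proof.
move=> hs; rewrite /wt half_eq.
case: (ltP ((E i a Q)%:R : rat) ((1/2) * (((s - i)%N)%:R * n%:R - ((d - l)%N)%:R))) => he.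
  by rewrite (Gia_eq hs he) ge_min lexx.
by rewrite ge_min he orbT.
Qed.

Lemma X_le i a (Q : {poly F}) : (size Q <= (d - l).+1)%N ->
  (Gia T2 n d l s f i a)`_(d - l) != Q`_(d - l) ->
  n%:R * (((s - i)%N)%:R - ((d - l)%N)%:R / n%:R) - wt T2 n d l s f a i <= (E i a Q)%:R.
Proof.
move=> hs hc.
have hne : Gia T2 n d l s f i a != Q by apply: contraNneq hc => ->.
have hX : n%:R * (((s - i)%N)%:R - ((d - l)%N)%:R / n%:R) = 
          ((s - i)%N)%:R * n%:R - ((d - l)%N)%:R :> rat.
  have hn' : (n%:R : rat) != 0 by rewrite pnatr_eq0 -lt0n. field; exact hn'.
rewrite hX /wt half_eq.
case: (ltP ((E i a Q)%:R : rat) ((1/2) * (((s - i)%N)%:R * n%:R - ((d - l)%N)%:R))) => he.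
  by rewrite (Gia_eq hs he) eqxx in hne.
have hd := Enc_dist (s - i) hu hne (Gia_size i a) hs.
have ht := Delta1_tri (s - i) T2 (Enc1 (s - i) (Gia T2 n d l s f i a)) (Enc1 (s - i) Q) (fia s f i a).
rewrite [X in (_ <= X + _)%N]Delta1_sym in ht.
have := natrB_ge ((s - i) * size T2) (d - l); rewrite hn natrM => hb.
move: hd ht; rewrite -(ler_nat rat) => hd; rewrite -(ler_nat rat) natrD => ht.
rewrite hn in hd; rewrite /E in he *.
set A := ((Delta1 (s - i) T2 _ _)%:R : rat) in ht.
set B := ((Delta1 (s - i) T2 (fia s f i a) _)%:R : rat) in ht he *.
rewrite lerBlDr -lerBlDl le_min; apply/andP; split; lra.
Qed.
End Dec.

Section Shift.
Variable F : fieldType.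

Lemma dmin2_le s (D : nat -> nat -> F) i : (i < s)%N ->
  (dmin2 s D <= i + dmin1 (s - i) (fun j => D i j))%N.
Proof.
move=> hi; rewrite /dmin2.
apply: leq_trans (bigmin_le s _ (Ordinal hi)) _ => /=.
rewrite /dmin1.
apply: (big_ind2 (fun x y => x <= i + y)%N) => //.
- by rewrite subnKC // ltnW.
- by move=> x1 x2 y1 y2 h1 h2; rewrite addn_minr leq_min !geq_min h1 h2 orbT.
- move=> j _; case: ifP => // _; rewrite subnKC // ltnW //.
Qed.

Lemma size_map_le (R1 R2 : nzRingType) (g : R1 -> R2) (R : {poly R1}) : (size (map_poly g R) <= size R)%N.
Proof. by rewrite map_polyE; apply: leq_trans (size_Poly _) _; rewrite size_map. Qed.

Lemma comp_polyE_wide (R : nzRingType) (p q : {poly R}) N : (size p <= N)%N ->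
  p \Po q = \sum_(k < N) p`_k *: q ^+ k.
Proof.
move=> hN; rewrite comp_polyE (big_ord_widen N (fun k => p`_k *: q ^+ k) hN) big_mkcond /=.
apply: eq_bigr => k _; case: ifP => // /negbT; rewrite -leqNgt => h.
by rewrite nth_default // scale0r.
Qed.

Lemma coef_shift (R : {poly {poly F}}) (c : F) i j :
  ((R \Po ('X + (c%:P)%:P))`_j)`_i = ((map_poly (fun q : {poly F} => q`_i) R) \Po ('X + c%:P))`_j.
Proof.
rewrite -map_polyXaddC comp_polyE (comp_polyE_wide _ (size_map_le _ R)).
rewrite !coef_sum; apply: eq_bigr => k _.
rewrite -mul_polyC coefCM coefZ -rmorphXn coef_map /= coefMC coef_map_id0 ?coef0 //.
Qed.
End Shift.

Unset Implicit Arguments.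
Theorem lemma7p1 (F : fieldType) (T1 T2 : seq F) (n d l s r : nat)
  (f : F -> F -> nat -> nat -> F) (P : {poly {poly F}}) :
  uniq T1 -> uniq T2 -> size T1 = n -> size T2 = n -> (0 < n)%N ->
  (l <= d)%N -> (r + (d - l) %/ n)%N = s ->
  (* f takes values in F_{<s}[z1,z2] *)
  (forall a b i j, a \in T1 -> b \in T2 -> (s <= i + j)%N -> f a b i j = 0) ->
  (* P = sum_{i=l}^d P_i(x1) x2^{d-i}, deg P_i <= i *)
  (size P <= (d - l).+1)%N ->
  (forall k, (k <= d)%N -> (size (P`_k)%R <= (d - k).+1)%N) ->
  ((Delta2 s T1 T2 f (Enc2 s P))%:R : rat) < (1/2) * n%:R ^+ 2 * (s%:R - d%:R / n%:R) ->
  Gamma T1 T2 n d l s r f P`_(d - l) <= (Delta2 s T1 T2 f (Enc2 s P))%:R /\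
  ((Delta2 s T1 T2 f (Enc2 s P))%:R : rat) < (1/2) * n%:R ^+ 2 * (s%:R - d%:R / n%:R).
Proof.
move=> hu1 hu2 hs1 hs2 hn0 hld hr hf hP hPk hlt; split => //.
set R := P`_(d - l).
pose Dl a := (\sum_(b <- T2) (s - dmin2 s (fun i j => (f a b i j - Enc2 s P a b i j)%R)))%N.
have hD : Delta2 s T1 T2 f (Enc2 s P) = (\sum_(a <- T1) Dl a)%N by [].
pose Qa a i := map_poly (fun q : {poly F} => q`_i) (map_poly (fun q : {poly F} => q \Po ('X + a%:P)) P).
have hrs : (r <= s)%N by rewrite -hr leq_addr.
have hE : forall a i, (i < s)%N -> (Delta1 (s - i) T2 (fia s f i a) (Enc1 (s - i) (Qa a i)) <= Dl a)%N.
  move=> a i hi; rewrite /Delta1 /Dl; apply: leq_sum => b _.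
  have := dmin2_le (fun i j => f a b i j - Enc2 s P a b i j) hi.
  rewrite (@dmin1_eq _ (s - i) (fun j => fia s f i a b j - Enc1 (s - i) (Qa a i) b j)
     (fun j => f a b i j - Enc2 s P a b i j)); first by lia.
  move=> j hj; have hij : (i + j < s)%N by lia.
  by rewrite /fia /Enc1 /Enc2 hj hij /shift2 coef_shift.
have hsQ : forall a i, (size (Qa a i) <= (d - l).+1)%N.
  by move=> a i; apply: leq_trans (size_map_le _ _) (leq_trans (size_map_le _ _) hP).
have hQc : forall a i, (Qa a i)`_(d - l) = (R \Po ('X + a%:P))`_i.
  by move=> a i; rewrite coef_map_id0 ?coef0 // coef_map_id0 // comp_poly0.
have hw : forall a j, (j < r)%N -> wt T2 n d l s f a j <= (Dl a)%:R.
  move=> a j hj; apply: le_trans (wt_le s f hu2 hs2 hn0 j a (hsQ a j)) _.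
  rewrite ler_nat; apply: hE; lia.
have hmp : forall a i, (0 < i)%N -> (i <= r)%N -> maxprev T2 n d l s f a i <= (Dl a)%:R.
  move=> a i hi hir; rewrite /maxprev.
  apply: (big_ind (fun x => x <= (Dl a)%:R)).
  - by apply: hw; lia.
  - by move=> x y hx hy; rewrite ge_max hx hy.
  - by move=> j _; apply: hw; have := ltn_ord j; lia.
pose L a := agreeLen T2 n d l s r f R a.
have hL : forall a, (L a <= r)%N.
  move=> a; rewrite /L /agreeLen; apply/bigmax_leqP => j _; rewrite -ltnS; exact: ltn_ord.
have hagree : forall a k, (k < L a)%N -> gfun T2 n d l s r f a k = (R \Po ('X + a%:P))`_k.
  move=> a k hk; apply/eqP; apply/negPn/negP => hne.
  suff : (L a <= k)%N by lia.
  rewrite /L /agreeLen; apply/bigmax_leqP => j /forallP hj.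
  rewrite leqNgt; apply/negP => hkj; have := hj (Ordinal hkj); by rewrite /= (negPf hne).
have hLneq : forall a, (L a < r)%N -> gfun T2 n d l s r f a (L a) != (R \Po ('X + a%:P))`_(L a).
  move=> a hLr; apply/negP => /eqP heq.
  have hLr' : ((L a).+1 < r.+1)%N by rewrite ltnS.
  suff : ((L a).+1 <= agreeLen T2 n d l s r f R a)%N by rewrite -/(L a) ltnn.
  have hP0 : [forall k : 'I_(L a).+1, gfun T2 n d l s r f a k == (R \Po ('X + a%:P))`_k].
    apply/forallP => k /=; have := ltn_ord k; rewrite ltnS leq_eqVlt => /orP[/eqP -> | hk].
      by rewrite heq.
    by rewrite hagree.
  exact: (@leq_bigmax_cond _ (fun j : 'I_r.+1 => [forall k : 'I_j, gfun T2 n d l s r f a k == (R \Po ('X + a%:P))`_k]) (fun j => nat_of_ord j) (Ordinal hLr') hP0).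
have hX : forall a, (L a < r)%N ->
    n%:R * (((s - L a)%N)%:R - ((d - l)%N)%:R / n%:R) - wt T2 n d l s f a (L a) <= (Dl a)%:R.
  move=> a hLr; apply: le_trans (X_le hu2 hs2 hn0 (hsQ a (L a)) _) _.
    rewrite hQc; have := hLneq a hLr; by rewrite /gfun hLr.
  rewrite ler_nat; apply: hE; lia.
rewrite hD natr_sum.
apply: (@le_trans _ _ (\sum_(i < r) \sum_(a <- T1 | L a == i) ((Dl a)%:R : rat)
   + \sum_(a <- T1 | L a == r) ((Dl a)%:R : rat))).
  rewrite /Gamma; apply: lerD.
  - apply: ler_sum => i _; apply: ler_sum => a /eqP hLa.
    have hLa' : L a = i := hLa.
    have hLr : (L a < r)%N by rewrite hLa' ltn_ord.
    have hXa := hX a hLr; rewrite hLa' in hXa.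
    rewrite /=; case: eqP => hi0 //.
    rewrite ge_max hXa /=; apply: hmp; [by rewrite lt0n; apply/eqP | exact: ltnW (ltn_ord i)].
  - apply: ler_sum => a _; case: eqP => hr0; first exact: ler0n.
    by apply: hmp; [rewrite lt0n; apply/eqP | ].
have -> : \sum_(i < r) \sum_(a <- T1 | L a == i) ((Dl a)%:R : rat)
   + \sum_(a <- T1 | L a == r) ((Dl a)%:R : rat) =
   \sum_(i < r.+1) \sum_(a <- T1 | L a == i) ((Dl a)%:R : rat) by rewrite big_ord_recr.
rewrite (eq_bigr (fun i : 'I_r.+1 => \sum_(a <- T1) (if L a == i then ((Dl a)%:R : rat) else 0))); last first.
  by move=> i _; rewrite big_mkcond.
rewrite exchange_big /= le_eqVlt; apply/orP; left; apply/eqP; apply: eq_bigr => a _.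
rewrite -big_mkcond (big_pred1 (inord (L a))) // => j /=.
have hLa : (L a < r.+1)%N by rewrite ltnS.
apply/eqP/eqP => [h | ->]; last by rewrite inordK.
by apply/val_inj; rewrite /= inordK.
Qed.
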